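(* Let $(J,S)$ be a homogeneous $d$-dimensional multi-time Markov renewal chain with semi-Markov kernel $q$ and sojourn times $(X_n)$. Let $\phi:\mathbb{N}^d\to\mathbb{N}$ be a function, $\Phi_n:=\phi(X_n)$ and $S^{[\phi]}_n:=\sum_{k=0}^n\Phi_k$, $n\ge0$. Then $(J,S^{[\phi]})$ is a Markov renewal chain with interjump times $(\Phi_n)_{n\ge1}$, i.e. for all $n$, $j\in E$, $k\in\mathbb{N}$, a.s. $\mathbb{P}(J_{n+1}=j,S^{[\phi]}_{n+1}-S^{[\phi]}_n=k\mid J_{0:n},S^{[\phi]}_{0:n})=q^{[\phi]}_{J_nj}(k)$, with semi-Markov kernel $$q^{[\phi]}_{ij}(k)=\sum_{v\in\mathbb{N}^d:\ \phi(v)=k}q_{ij}(v),\qquad i,j\in E,\ k\in\mathbb{N}.$$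
   Context: $E=\{1,\dots,s\}$. $\mathbb{N}^d$ carries the partial order $k\le l$ iff $k_u\le l_u$ for all $u$, and $k<l$ iff $k\le l$, $k\ne l$. A homogeneous $d$-dimensional multi-time Markov renewal chain is a process $(J_n,S_n)_{n\in\mathbb{N}}$, $J_n\in E$, $S_n\in\mathbb{N}^d$, $S_0=0_d$, $S_n<S_{n+1}$, such that a.s. $\mathbb{P}(J_{n+1}=j,S_{n+1}-S_n=k\mid J_{0:n},S_{0:n})=q_{J_nj}(k)$ where $q_{ij}(k)=\mathbb{P}(J_{n+1}=j,S_{n+1}-S_n=k\mid J_n=i)$ does not depend on $n$ (the semi-Markov kernel). Sojourn times: $X_0=0_d$, $X_n=S_n-S_{n-1}$ for $n\ge1$. *)

(* Defs.v *)
From HB Require Import structures.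
From mathcomp Require Import all_boot all_order all_algebra.
From mathcomp Require Import all_classical all_reals all_analysis.
Set Implicit Arguments. Unset Strict Implicit. Unset Printing Implicit Defensive.
Import Order.TTheory GRing.Theory Num.Theory.
Local Open Scope classical_set_scope.
Local Open Scope ring_scope.

Definition vec (d : nat) := {ffun 'I_d -> nat}.
Definition vzero (d : nat) : vec d := [ffun => 0%N].
Definition vle d (k l : vec d) : Prop := forall u, (k u <= l u)%N.
Definition vlt d (k l : vec d) : Prop := vle k l /\ k <> l.
(* componentwise difference (used only when k >= l, where it is exact) *)
Definition vsub d (k l : vec d) : vec d := [ffun u => (k u - l u)%N].

Section MRC.
Context {dT : measure_display} {T : measurableType dT} {R : realType}.
Context (s d : nat).

Definition sojourn (S : nat -> T -> vec d) (n : nat) (w : T) : vec d :=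
  if n is n'.+1 then vsub (S n w) (S n' w) else vzero d.

Definition history {V : Type} (J : nat -> T -> 'I_s) (S : nat -> T -> V)
  (n : nat) (i : nat -> 'I_s) (t : nat -> V) : set T :=
  [set w | forall m, (m <= n)%N -> J m w = i m /\ S m w = t m].

(* The a.s. conditional identity given the discrete variables J_{0:n},S_{0:n}
   is written atom-wise (multiplied out):
   P(J_{n+1}=j, S_{n+1}-S_n=k, H) = q_{i_n j}(k) P(H) for every history H. *)
Definition is_MTMRC (P : probability T R) (J : nat -> T -> 'I_s)
  (S : nat -> T -> vec d) (q : 'I_s -> 'I_s -> vec d -> R) : Prop :=
  (forall n i, measurable [set w | J n w = i]) /\
      (forall n v, measurable [set w | S n w = v]) /\
      (forall w, S 0%N w = vzero d) /\
      (forall n w, vlt (S n w) (S n.+1 w)) /\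
      (forall i j k, 0 <= q i j k) /\
      (forall n j (k : vec d) (i : nat -> 'I_s) (t : nat -> vec d),
        P ([set w | J n.+1 w = j /\ vsub (S n.+1 w) (S n w) = k]
             `&` history J S n i t)
        = ((q (i n) j k)%:E * P (history J S n i t))%E).

Definition Sphi (phi : vec d -> nat) (S : nat -> T -> vec d) (n : nat) (w : T)
  : nat := (\sum_(0 <= m < n.+1) phi (sojourn S m w))%N.

Definition qphi (q : 'I_s -> 'I_s -> vec d -> R) (phi : vec d -> nat)
  (i j : 'I_s) (k : nat) : \bar R :=
  \esum_(v in [set v : vec d | phi v = k]) (q i j v)%:E.

End MRC.

(* Main.v *)
Require Import Defs.
From HB Require Import structures.
From mathcomp Require Import all_boot all_order all_algebra.
From mathcomp Require Import all_classical all_reals all_analysis.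
From mathcomp Require Import zify.
Import Order.TTheory GRing.Theory Num.Theory.
Local Open Scope classical_set_scope.
Local Open Scope ring_scope.

Section Gen.
Context {dT : measure_display} {T : measurableType dT} {R : realType}.
Local Open Scope ereal_scope.

Lemma esum_cnt (C : countType) (A : set C) (a : C -> \bar R) :
  (forall c, 0 <= a c) ->
  \esum_(c in A) a c = \sum_(m <oo | m \in pickle @` A)
     (if pickle_inv m is Some c then a c else 0).
Proof.
move=> a0.
rewrite nneseries_esum; last by move=> m _; case: pickle_inv.
rewrite set_mem_set esum_image; last by move=> x y _ _; by move=> /(pcan_inj (@pickleK _)).
by apply: eq_esum => c _; rewrite pickleK_inv.
Qed.

Lemma measure_cnt (mu : {measure set T -> \bar R}) (C : countType) (A : set C)
  (F : C -> set T) :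
  (forall c, measurable (F c)) -> trivIset A F ->
  mu (\bigcup_(c in A) F c) = \esum_(c in A) mu (F c).
Proof.
move=> mF tF.
pose Fp m := if pickle_inv m is Some c then F c else set0.
have -> : \bigcup_(c in A) F c = \bigcup_(m in pickle @` A) Fp m.
  apply/seteqP; split => w.
  - case=> c Ac Fcw; exists (pickle c); first by exists c.
    by rewrite /Fp pickleK_inv.
  - by case=> _ [c Ac <-]; rewrite /Fp pickleK_inv => Fcw; exists c.
rewrite measure_bigcup.
- rewrite esum_cnt //; apply: eq_eseriesr => m _; rewrite /Fp.
  by case: pickle_inv => //; rewrite measure0.
- by move=> m _; rewrite /Fp; case: pickle_inv.
- move=> m1 m2 [c1 Ac1 <-] [c2 Ac2 <-]; rewrite /Fp !pickleK_inv => h.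
  by congr pickle; exact: tF.
Qed.

Lemma esumZ_cnt (C : countType) (A : set C) (a : C -> \bar R) (x : R) :
  (0 <= x)%R -> (forall c, 0 <= a c) ->
  \esum_(c in A) (x%:E * a c) = x%:E * \esum_(c in A) a c.
Proof.
move=> x0 a0; rewrite !esum_cnt //; last by move=> c; rewrite mule_ge0.
rewrite -nneseriesZl; last by move=> m _; case: pickle_inv.
by apply: eq_eseriesr => m _; case: pickle_inv => //; rewrite mule0.
Qed.

Lemma measurable_cnt (C : countType) (Z : T -> C) :
  (forall c, measurable (Z @^-1` [set c])) -> forall B, measurable (Z @^-1` B).
Proof.
move=> mZ B.
have -> : Z @^-1` B = \bigcup_(m in pickle @` B)
    (if pickle_inv m is Some c then Z @^-1` [set c] else set0).
  apply/seteqP; split => w.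
  - by move=> Bw; exists (pickle (Z w)); [exists (Z w)|rewrite pickleK_inv].
  - by case=> _ [c Bc <-]; rewrite pickleK_inv /= => ->.
by apply: bigcup_measurable => m _; case: pickle_inv.
Qed.
End Gen.

Theorem proposition6 (dT : measure_display) (T : measurableType dT)
  (R : realType) (P : probability T R) (s d : nat)
  (J : nat -> T -> 'I_s) (S : nat -> T -> vec d)
  (q : 'I_s -> 'I_s -> vec d -> R) (phi : vec d -> nat) :
  is_MTMRC P J S q ->
  forall (n : nat) (j : 'I_s) (k : nat) (i : nat -> 'I_s) (t : nat -> nat),
    P ([set w | J n.+1 w = j /\ (Sphi phi S n.+1 w - Sphi phi S n w)%N = k]
         `&` history J (Sphi phi S) n i t)
    = (qphi q phi (i n) j k * P (history J (Sphi phi S) n i t))%E.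
Proof.
move=> [mJ [mS [S0 [Slt [q0 ker]]]]] n j k i t.
pose Z w : {ffun 'I_n.+2 -> 'I_s * vec d} := [ffun m : 'I_n.+2 => (J m w, S m w)].
have mZ c : measurable (Z @^-1` [set c]).
  have -> : Z @^-1` [set c] = \bigcap_(m in [set m | (m < n.+2)%N])
      ([set w | J m w = (c (inord m)).1] `&` [set w | S m w = (c (inord m)).2]).
    apply/seteqP; split => w /=.
    - by move=> <- m /= hm; rewrite /Z ffunE inordK.
    - move=> h; apply/ffunP => m; rewrite ffunE.
      have [/= -> ->] := h m (ltn_ord m).
      by rewrite inord_val; case: (c m).
  apply: bigcap_measurableType => m _; apply: measurableI; [exact: mJ|exact: mS].
have mdet (X : set T) : (forall w w', Z w = Z w' -> X w -> X w') -> measurable X.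
  move=> hX; have -> : X = Z @^-1` (Z @` X).
    apply/seteqP; split => w /=; first by move=> Xw; exists w.
    by case=> w0 Xw0 e; exact: hX e Xw0.
  exact: measurable_cnt.
pose sig w : {ffun 'I_n.+1 -> vec d} := [ffun m : 'I_n.+1 => S m w].
have eqs w w' : Z w = Z w' ->
    [/\ (forall m, (m <= n.+1)%N -> J m w = J m w'),
        (forall m, (m <= n.+1)%N -> S m w = S m w'),
        (forall m, (m <= n.+1)%N -> Sphi phi S m w = Sphi phi S m w') &
        sig w = sig w'].
  move=> e.
  have JS m : (m <= n.+1)%N -> J m w = J m w' /\ S m w = S m w'.
    move=> hm; have := congr1 (fun f : {ffun 'I_n.+2 -> 'I_s * vec d} => f (inord m)) e.
    by rewrite /Z !ffunE inordK //; case.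
  have eS m : (m <= n.+1)%N -> S m w = S m w' by move=> /JS[].
  split.
  - by move=> m /JS[].
  - exact: eS.
  - move=> m hm; rewrite /Sphi; apply: eq_big_nat => l /andP[_ hl].
    case: l hl => [|l] hl //=; rewrite /sojourn !eS //; lia.
  - by apply/ffunP => m; rewrite !ffunE eS //; have := ltn_ord m; lia.

have sojE w : (Sphi phi S n.+1 w - Sphi phi S n w)%N = phi (vsub (S n.+1 w) (S n w)).
  by rewrite /Sphi big_nat_recr //= addKn.
pose G (tt : {ffun 'I_n.+1 -> vec d}) m := (\sum_(0 <= l < m.+1)
   phi (if l is l'.+1 then vsub (tt (inord l)) (tt (inord l')) else vzero d))%N.
have SphiG w m : (m <= n)%N -> Sphi phi S m w = G (sig w) m.
  move=> hm; rewrite /Sphi /G; apply: eq_big_nat => l /andP[_ hl].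
  case: l hl => [|l] hl //=; rewrite /sojourn /sig !ffunE !inordK //; lia.
pose K := [set v : vec d | phi v = k].
pose Av v := [set w | J n.+1 w = j /\ vsub (S n.+1 w) (S n w) = v].
pose H := history J (Sphi phi S) n i t.
pose B := [set tt : {ffun 'I_n.+1 -> vec d} | forall m, (m <= n)%N -> G tt m = t m].
pose Hs tt := [set w | (forall m, (m <= n)%N -> J m w = i m) /\ sig w = tt].
have HE : H = \bigcup_(tt in B) Hs tt.
  apply/seteqP; split => w /=.
  - move=> hH; exists (sig w).
      by move=> m hm; rewrite -SphiG //; have [] := hH m hm.
    by split => // m hm; have [] := hH m hm.
  - case=> tt Btt [hJ e] m hm; split; first exact: hJ.
    by rewrite SphiG // e Btt.
have HsE tt : Hs tt = history J S n i (fun m => tt (inord m)).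
  apply/seteqP; split => w /=.
  - by case=> hJ <- m hm; split; [exact: hJ|rewrite /sig ffunE inordK].
  - move=> h; split; first by move=> m /h[].
    apply/ffunP => m; rewrite ffunE.
    have hm : (m <= n)%N by have := ltn_ord m; lia.
    by have [_ ->] := h m hm; rewrite inord_val.
have mHs tt : measurable (Hs tt).
  apply: mdet => w w' /eqs[eJ _ _ eg] [hJ hs]; split; last by rewrite -eg.
  by move=> m hm; rewrite -eJ ?hJ //; lia.
have tHs (X : set T) : trivIset B (fun tt => X `&` Hs tt).
  by move=> t1 t2 _ _ [w [[_ [_ <-]] [_ [_ <-]]]].
have step3 v : P (Av v `&` H) = ((q (i n) j v)%:E * P H)%E.
  rewrite HE setI_bigcupr measure_cnt; last first.
  - exact: tHs.
  - move=> tt; apply: mdet => w w' /eqs[eJ eS _ eg] [[hj hv] [hJ hs]].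
    split; last by split; [move=> m hm; rewrite -eJ ?hJ //; lia|rewrite -eg].
    by split; [rewrite -eJ|rewrite -!eS].
  rewrite measure_cnt //; last by move=> t1 t2 _ _ [w [[_ <-] [_ <-]]].
  rewrite -esumZ_cnt; [|exact: q0|by move=> c; exact: measure_ge0].
  apply: eq_esum => tt _; rewrite HsE; exact: ker.
have -> : [set w | J n.+1 w = j /\ (Sphi phi S n.+1 w - Sphi phi S n w)%N = k] `&` H
    = \bigcup_(v in K) (Av v `&` H).
  apply/seteqP; split => w /=.
  - by case=> -[hj]; rewrite sojE => hk hH; exists (vsub (S n.+1 w) (S n w)).
  - by case=> v /= hv [[hj hw] hH]; split => //; split => //; rewrite sojE hw.
rewrite measure_cnt; last first.
  - by move=> v1 v2 _ _ [w [[[_ <-] _] [[_ <-] _]]].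
  - move=> v; apply: mdet => w w' /eqs[eJ eS eP _] [[hj hv] hH].
    split; first by split; [rewrite -eJ|rewrite -!eS].
    move=> m hm; have [h1 h2] := hH m hm; rewrite -eJ ?h1 -?eP ?h2 //; lia.
have mH : measurable H by rewrite HE; apply: mdet => w w' /eqs[eJ _ _ eg] [tt Btt [hJ hs]]; exists tt => //; split; [move=> m hm; rewrite -eJ ?hJ //; lia|rewrite -eg].
have PHE := fineK (fin_num_measure P H mH).
rewrite /qphi (eq_esum (fun v _ => step3 v)) -PHE.
rewrite (eq_esum (fun v _ => muleC _ _)) esumZ_cnt.
- by rewrite muleC.
- by apply: fine_ge0; exact: measure_ge0.
- by move=> c; rewrite lee_fin q0.
Qed.
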